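(* Let $\alpha\in[0,1)$, $K_\alpha(x,y)=\dfrac{1}{x^2+2\cos(\pi\alpha)xy+y^2}$, $Q_\alpha(x,y)=y+x\cos(\pi\alpha)$, and for integers $p\ge0$ $$T_{\alpha,2p}=(2p)!\sum_{k=0}^p(-1)^{p-k}\binom{p+k}{p-k}(4Q_\alpha^2)^kK_\alpha^{p+k+1},\qquad T_{\alpha,2p+1}=2(2p+1)!\,Q_\alpha\sum_{k=0}^p(-1)^{p+1-k}\binom{p+1+k}{p-k}(4Q_\alpha^2)^kK_\alpha^{p+k+2}.$$ Then for every $j\ge1$ and $r\ge0$, $$\frac{\partial^jT_{\alpha,r}}{\partial x^j}(1,0+)=(-1)^j\frac{(r+j+1)!}{(r+1)!}\,T_{\alpha,r}(1,0+).$$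
   Context: For a function $F(x,y)$ smooth on $(0,\infty)\times[0,\infty)$, $F(1,0+)$ denotes $\lim_{y\to0+}F(1,y)$. *)

(* Defs.v *)
From Stdlib Require Import Reals Factorial Binomial.
From Coquelicot Require Import Coquelicot.
Open Scope R_scope.

Definition Kal (alpha x y : R) : R :=
  / (x ^ 2 + 2 * cos (PI * alpha) * x * y + y ^ 2).

Definition Qal (alpha x y : R) : R := y + x * cos (PI * alpha).

Definition T_even (alpha : R) (p : nat) (x y : R) : R :=
  INR (fact (2 * p)) *
  sum_f_R0 (fun k => (-1) ^ (p - k) * Binomial.C (p + k) (p - k)
                      * (4 * Qal alpha x y ^ 2) ^ k
                      * Kal alpha x y ^ (p + k + 1)) p.

Definition T_odd (alpha : R) (p : nat) (x y : R) : R :=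
  2 * INR (fact (2 * p + 1)) * Qal alpha x y *
  sum_f_R0 (fun k => (-1) ^ (p + 1 - k) * Binomial.C (p + 1 + k) (p - k)
                      * (4 * Qal alpha x y ^ 2) ^ k
                      * Kal alpha x y ^ (p + k + 2)) p.

Definition Tal (alpha : R) (r : nat) (x y : R) : R :=
  if Nat.even r then T_even alpha (Nat.div2 r) x y
  else T_odd alpha (Nat.div2 r) x y.

(* Main.v *)
Require Import Defs.
From Stdlib Require Import Reals Factorial Binomial Lra Lia Psatz FunctionalExtensionality.
From Coquelicot Require Import Coquelicot.
Open Scope R_scope.

Fixpoint Good (n:nat) (F: R -> R -> R) : Prop :=
  match n with
  | O => continuous (fun y => F 1 y) 0
  | S m => continuous (fun y => F 1 y) 0 /\ exists d : posreal, exists F' : R->R->R,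
      (forall x y, Rabs (x-1) < d -> Rabs y < d -> is_derive (fun t => F t y) x (F' x y)) /\ Good m F'
  end.

Lemma Good_0 n F : Good n F -> continuous (fun y => F 1 y) 0.
Proof. destruct n; simpl; tauto. Qed.

Lemma Good_le n : forall F, Good (S n) F -> Good n F.
Proof.
  induction n as [|n IH]; intros F H.
  - exact (proj1 H).
  - destruct H as [Hc [d [F' [Hd HG]]]]. split; [exact Hc|].
    exists d, F'. split; [exact Hd| apply IH; exact HG].
Qed.

Definition pmin (a b : posreal) : posreal := mkposreal (Rmin a b) (Rmin_pos _ _ (cond_pos a) (cond_pos b)).

Lemma pmin_l (a b : posreal) z : Rabs z < pmin a b -> Rabs z < a.
Proof. simpl; intros; eapply Rlt_le_trans; [eassumption| apply Rmin_l]. Qed.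
Lemma pmin_r (a b : posreal) z : Rabs z < pmin a b -> Rabs z < b.
Proof. simpl; intros; eapply Rlt_le_trans; [eassumption| apply Rmin_r]. Qed.

Lemma Good_plus n : forall F G, Good n F -> Good n G -> Good n (fun x y => F x y + G x y).
Proof.
  induction n as [|n IH]; intros F G HF HG.
  - apply (continuous_plus (fun y => F 1 y) (fun y => G 1 y)); assumption.
  - destruct HF as [HFc [d1 [F' [HFd HF']]]]. destruct HG as [HGc [d2 [G' [HGd HG']]]].
    split. apply (continuous_plus (fun y => F 1 y) (fun y => G 1 y)); assumption.
    exists (pmin d1 d2), (fun x y => F' x y + G' x y). split.
    + intros x y Hx Hy. apply (is_derive_plus (fun t => F t y) (fun t => G t y)).
      apply HFd; eapply pmin_l; eassumption. apply HGd; eapply pmin_r; eassumption.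
    + apply IH; assumption.
Qed.

Lemma Good_mult n : forall F G, Good n F -> Good n G -> Good n (fun x y => F x y * G x y).
Proof.
  induction n as [|n IH]; intros F G HF HG.
  - apply (continuous_mult (fun y => F 1 y) (fun y => G 1 y)); assumption.
  - pose proof (Good_le _ _ HF) as HF0. pose proof (Good_le _ _ HG) as HG0.
    destruct HF as [HFc [d1 [F' [HFd HF']]]]. destruct HG as [HGc [d2 [G' [HGd HG']]]].
    split. apply (continuous_mult (fun y => F 1 y) (fun y => G 1 y)); assumption.
    exists (pmin d1 d2), (fun x y => F' x y * G x y + F x y * G' x y). split.
    + intros x y Hx Hy. apply (is_derive_mult (fun t => F t y) (fun t => G t y)).
      apply HFd; eapply pmin_l; eassumption. apply HGd; eapply pmin_r; eassumption.
      intros; apply Rmult_comm.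
    + apply Good_plus; apply IH; assumption.
Qed.

Lemma Good_const n : forall c, Good n (fun _ _ => c).
Proof.
  induction n as [|n IH]; intro c.
  - apply continuous_const.
  - split. apply continuous_const. exists (mkposreal 1 Rlt_0_1), (fun _ _ => 0).
    split; [intros; auto_derive; [exact I| try ring]| apply IH].
Qed.

Lemma Good_x n : Good n (fun x _ => x).
Proof.
  destruct n. apply continuous_const.
  split. apply continuous_const. exists (mkposreal 1 Rlt_0_1), (fun _ _ => 1).
  split; [intros; auto_derive; [exact I| try ring]| apply Good_const].
Qed.

Lemma Good_y n : Good n (fun _ y => y).
Proof.
  destruct n. apply continuous_id.
  split. apply continuous_id. exists (mkposreal 1 Rlt_0_1), (fun _ _ => 0).
  split; [intros; auto_derive; [exact I| try ring]| apply Good_const].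
Qed.

Lemma Good_pow n F k : Good n F -> Good n (fun x y => F x y ^ k).
Proof.
  intros H; induction k as [|k IH]. exact (Good_const n 1). apply (Good_mult n F (fun x y => F x y ^ k)); auto.
Qed.

Lemma Good_sum n (G : nat -> R -> R -> R) p : (forall k, Good n (G k)) -> Good n (fun x y => sum_f_R0 (fun k => G k x y) p).
Proof.
  intros H; induction p as [|p IH]. apply H.
  apply (Good_plus n (fun x y => sum_f_R0 (fun k => G k x y) p) (G (S p))); auto.
Qed.

Ltac kal_tac := idtac.
Ltac good :=
  match goal with
  | |- Good _ (fun x y => ?c) => apply Good_const
  | |- Good _ (fun x y => x) => apply Good_x
  | |- Good _ (fun x y => y) => apply Good_y
  | |- Good _ (fun x y => @?A x y + @?B x y) => apply (Good_plus _ A B); good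
  | |- Good _ (fun x y => @?A x y * @?B x y) => apply (Good_mult _ A B); good
  | |- Good _ (fun x y => @?A x y ^ ?k) => apply (Good_pow _ A k); good
  | |- Good _ (fun x y => sum_f_R0 (fun k => @?G k x y) ?p) => apply (Good_sum _ G p); intro; cbv beta; good
  | |- Good _ (fun x y => Kal ?a x y) => kal_tac
  | |- Good _ (Kal ?a) => kal_tac
  | _ => idtac
  end.

Lemma D_pos c x y : -1 <= c <= 1 -> Rabs (x-1) < /10 -> Rabs y < /10 -> 0 < x^2 + 2*c*x*y + y^2.
Proof.
  intros Hc Hx Hy. apply Rabs_def2 in Hx. apply Rabs_def2 in Hy.
  assert (0 < x + c*y) by nra.
  nra.
Qed.

Lemma Good_K alpha n : Good n (Kal alpha).
Proof.
  pose (c := cos (PI * alpha)). assert (Hc : -1 <= c <= 1) by apply COS_bound.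
  induction n as [|n IH].
  - apply (@ex_derive_continuous R_AbsRing R_NormedModule (fun y => Kal alpha 1 y) 0). unfold Kal. auto_derive. nra.
  - split. apply (@ex_derive_continuous R_AbsRing R_NormedModule (fun y => Kal alpha 1 y) 0). unfold Kal. auto_derive. nra.
    assert (H10 : 0 < /10) by lra.
    exists (mkposreal _ H10), (fun x y => (-1) * (2*x + 2*c*y) * (Kal alpha x y * Kal alpha x y)).
    split.
    + intros x y Hx Hy. simpl in Hx, Hy. pose proof (D_pos c x y Hc Hx Hy).
      unfold Kal. fold c. auto_derive. lra. field. lra.
    + good; exact IH.
Qed.

Ltac kal_tac ::= apply Good_K.

Lemma Good_Tal alpha r n : Good n (Tal alpha r).
Proof.
  unfold Tal. destruct (Nat.even r).
  - unfold T_even, Qal. good.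
  - unfold T_odd, Qal. good.
Qed.

Lemma Good_Derive n : forall F, Good n F -> exists d : posreal, exists Fn : R -> R -> R,
  (forall x y, Rabs (x-1) < d -> Rabs y < d -> Derive_n (fun t => F t y) n x = Fn x y)
  /\ continuous (fun y => Fn 1 y) 0.
Proof.
  induction n as [|n IH]; intros F HF.
  - exists (mkposreal 1 Rlt_0_1), F. split. intros; reflexivity. exact HF.
  - destruct HF as [Hc [d0 [F' [Hd HG]]]]. destruct (IH F' HG) as [d1 [Fn [Heq Hc']]].
    exists (pmin d0 d1), Fn. split; [|exact Hc'].
    intros x y Hx Hy.
    replace (S n) with (n + 1)%nat by lia. rewrite <- Derive_n_comp.
    rewrite <- (Heq x y (pmin_r _ _ _ Hx) (pmin_r _ _ _ Hy)).
    apply Derive_n_ext_loc.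
    assert (Ho : open (fun t => 1 - d0 < t /\ t < 1 + d0)) by (apply open_and; [apply open_gt|apply open_lt]).
    apply (filter_imp (fun t => 1 - d0 < t /\ t < 1 + d0)).
    + intros t Ht. simpl. apply is_derive_unique. apply Hd.
      apply Rabs_def1; lra. eapply pmin_l; eassumption.
    + apply Ho. pose proof (pmin_l _ _ _ Hx). apply Rabs_def2 in H. lra.
Qed.
Lemma inv_pow_deriv n x : x <> 0 -> is_derive (fun t => (/t)^(S n)) x (-(INR (S n)) * (/x)^(S (S n))).
Proof.
  intros Hx. auto_derive. exact Hx. simpl. field. exact Hx.
Qed.

Lemma Dn_inv q k : forall x, 0 < x -> Derive_n (fun t => (/t)^(S q)) k x
   = (-1)^k * INR (fact (q+k)) / INR (fact q) * (/x)^(S q + k).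
Proof.
  induction k as [|k IH]; intros x Hx.
  - simpl. rewrite Nat.add_0_r. field. split; [lra| apply INR_fact_neq_0].
  - simpl Derive_n at 1.
    rewrite (Derive_ext_loc _ (fun t => (-1)^k * INR (fact (q+k)) / INR (fact q) * (/t)^(S q + k))).
    + apply is_derive_unique.
      replace (S q + k)%nat with (S (q + k)) by lia.
      assert (H := is_derive_scal (fun t => (/t)^(S (q+k))) x ((-1)^k * INR (fact (q+k)) / INR (fact q)) _ (inv_pow_deriv (q+k) x ltac:(lra))).
      replace ((-1) ^ S k * INR (fact (q + S k)) / INR (fact q) * (/ x) ^ (S q + S k))
        with ((-1)^k * INR (fact (q+k)) / INR (fact q) * (- INR (S (q + k)) * (/ x) ^ S (S (q + k)))).
      exact H.
      replace (q + S k)%nat with (S (q+k)) by lia.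
      replace (S q + S k)%nat with (S (S (q+k))) by lia.
      change (fact (S (q+k))) with (S (q+k) * fact (q+k))%nat.
      rewrite mult_INR. simpl pow. field. split; [lra| apply INR_fact_neq_0].
    + assert (Ho : open (fun t => 0 < t)) by apply open_gt.
      apply (filter_imp (fun t => 0 < t)). intros t Ht. apply IH; exact Ht.
      apply Ho; exact Hx.
Qed.
Lemma powlem A x k m : x <> 0 -> (A * x^2)^k * (/(x^2))^(k+m) = A^k * (/x)^(2*m).
Proof.
  intros Hx. rewrite pow_add, Rpow_mult_distr, pow_mult.
  replace (A ^ k * (x ^ 2) ^ k * ((/ x ^ 2) ^ k * (/ x ^ 2) ^ m)) with
    (A ^ k * ((x ^ 2) * / x^2) ^ k * (/ x ^ 2) ^ m) by (rewrite Rpow_mult_distr; ring).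
  rewrite Rinv_r by (apply pow_nonzero; exact Hx). rewrite pow1.
  replace (/ x ^ 2) with ((/x)^2) by (field; exact Hx). ring.
Qed.

Lemma Teven0 alpha p x : x <> 0 -> T_even alpha p x 0 =
  (INR (fact (2*p)) * sum_f_R0 (fun k => (-1) ^ (p - k) * Binomial.C (p + k) (p - k)
                      * (4 * cos (PI*alpha) ^ 2) ^ k) p) * (/x)^(2*p+2).
Proof.
  intros Hx. unfold T_even, Qal, Kal. rewrite (Rmult_assoc (INR (fact (2*p)))). f_equal. rewrite (Rmult_comm (sum_f_R0 _ _) ((/x)^(2*p+2))).
  rewrite scal_sum. apply sum_eq. intros k Hk.
  replace (4 * (0 + x * cos (PI * alpha)) ^ 2) with ((4 * cos (PI*alpha)^2) * x^2) by ring.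
  replace (x ^ 2 + 2 * cos (PI * alpha) * x * 0 + 0 ^ 2) with (x^2) by ring.
  replace (p + k + 1)%nat with (k + (p+1))%nat by lia.
  rewrite Rmult_assoc, powlem by exact Hx.
  replace (2*p+2)%nat with (2*(p+1))%nat by lia. ring.
Qed.

Lemma Todd0 alpha p x : x <> 0 -> T_odd alpha p x 0 =
  (2 * INR (fact (2*p+1)) * cos (PI*alpha) * sum_f_R0 (fun k => (-1) ^ (p + 1 - k) * Binomial.C (p + 1 + k) (p - k)
                      * (4 * cos (PI*alpha) ^ 2) ^ k) p) * (/x)^(2*p+3).
Proof.
  intros Hx. unfold T_odd, Qal, Kal.
  set (S0 := sum_f_R0 (fun k => (-1) ^ (p + 1 - k) * Binomial.C (p + 1 + k) (p - k)
                      * (4 * cos (PI*alpha) ^ 2) ^ k) p).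
  replace (sum_f_R0
    (fun k : nat =>
     (-1) ^ (p + 1 - k) * Binomial.C (p + 1 + k) (p - k) *
     (4 * (0 + x * cos (PI * alpha)) ^ 2) ^ k *
     (/ (x ^ 2 + 2 * cos (PI * alpha) * x * 0 + 0 ^ 2)) ^ (p + k + 2)) p) with
   ((/x)^(2*p+4) * S0).
  2:{ unfold S0. rewrite scal_sum. apply sum_eq. intros k Hk.
  replace (4 * (0 + x * cos (PI * alpha)) ^ 2) with ((4 * cos (PI*alpha)^2) * x^2) by ring.
  replace (x ^ 2 + 2 * cos (PI * alpha) * x * 0 + 0 ^ 2) with (x^2) by ring.
  replace (p + k + 2)%nat with (k + (p+2))%nat by lia.
  symmetry. rewrite Rmult_assoc, powlem by exact Hx.
  replace (2*p+4)%nat with (2*(p+2))%nat by lia. ring. }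
  replace (2*p+4)%nat with (S (2*p+3))%nat by lia.
  set (X := (/x)^(2*p+3)). rewrite <- tech_pow_Rmult. fold X. field. exact Hx.
Qed.

Lemma T0 alpha r x : x <> 0 -> Tal alpha r x 0 = Tal alpha r 1 0 * (/x)^(r+2).
Proof.
  intros Hx. unfold Tal. pose proof (Nat.div2_odd r) as Hr.
  rewrite <- Nat.negb_even in Hr.
  destruct (Nat.even r); simpl in Hr.
  - rewrite !Teven0 by (auto; lra). rewrite Rinv_1, pow1, Rmult_1_r.
    replace (r+2)%nat with (2 * Nat.div2 r + 2)%nat by lia. reflexivity.
  - rewrite !Todd0 by (auto; lra). rewrite Rinv_1, pow1, Rmult_1_r.
    replace (r+2)%nat with (2 * Nat.div2 r + 3)%nat by lia. reflexivity.
Qed.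

Theorem lemma2 (alpha : R) (halpha : 0 <= alpha < 1) (j r : nat) (hj : (1 <= j)%nat) :
  exists L : R,
    filterlim (fun y => Tal alpha r 1 y) (at_right 0) (locally L) /\
    filterlim (fun y => Derive_n (fun x => Tal alpha r x y) j 1) (at_right 0)
      (locally ((-1) ^ j * INR (fact (r + j + 1)) / INR (fact (r + 1)) * L)).
Proof.
  exists (Tal alpha r 1 0).
  pose proof (Good_0 _ _ (Good_Tal alpha r 0)) as Hc.
  assert (Hle : filter_le (at_right 0) (locally 0)) by (apply filter_le_within; apply locally_filter).
  split.
  - eapply filterlim_filter_le_1. exact Hle. exact Hc.
  - destruct (Good_Derive j _ (Good_Tal alpha r j)) as [d [Fn [Heq Hc2]]].
    assert (Hv : Fn 1 0 = (-1) ^ j * INR (fact (r + j + 1)) / INR (fact (r + 1)) * Tal alpha r 1 0).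
    { rewrite <- Heq.
      2: rewrite Rminus_diag, Rabs_R0; apply cond_pos.
      2: rewrite Rabs_R0; apply cond_pos.
      rewrite (Derive_n_ext_loc _ (fun t => Tal alpha r 1 0 * (/t)^(S (r+1)))).
      - rewrite Derive_n_scal_l, Dn_inv by lra. rewrite Rinv_1, pow1.
        replace (r + 1 + j)%nat with (r + j + 1)%nat by lia. field. apply INR_fact_neq_0.
      - assert (Ho : open (fun t => 0 < t)) by apply open_gt.
        apply (filter_imp (fun t => 0 < t)).
        + intros t Ht. rewrite T0 by lra. f_equal. f_equal. lia.
        + apply Ho; lra. }
    apply filterlim_ext_loc with (fun y => Fn 1 y).
    + apply Hle. exists d. intros y Hy. symmetry. apply Heq.
      rewrite Rminus_diag, Rabs_R0; apply cond_pos.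
      unfold ball in Hy; simpl in Hy; unfold AbsRing_ball, abs, minus, plus, opp in Hy; simpl in Hy.
      rewrite Ropp_0, Rplus_0_r in Hy. exact Hy.
    + rewrite <- Hv. eapply filterlim_filter_le_1; [exact Hle| exact Hc2].
Qed.
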